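(* Let $(X_n)_{n\ge0}$ be a discrete-time Markov chain on a finite state space $\Sigma$ with transition matrix $P$, initial distribution $\nu$, mixing time $T$ and invariant distribution $\pi$. Then for every $n\ge1$, every $f:\Sigma\to[-1,1]$ with $\pi(f)=0$ and $\pi(f^2)\le\sigma^2$, and every $\gamma\in(0,\sigma^2\wedge\frac12]$, $$\mathbb P\Big[\sum_{i<n}f(X_i)\ge n\gamma\Big]\le4\exp\Big\{-\Big\lfloor\frac n{k(\gamma)T}-1\Big\rfloor\frac{\gamma^2}{6\sigma^2}\Big\},$$ where $k(\gamma)=-\log_2(\pi_\star\gamma^2/(6\sigma^2))$ and $\pi_\star=\min_{x\in\Sigma}\pi(x)$.
   Context: The mixing time is $T=\min\{n\ge0:\max_{x\in\Sigma}\|P^n(x,\cdot)-\pi\|_{TV}\le1/4\}$ with $\|\nu-\nu'\|_{TV}=\frac12\sum_x|\nu(x)-\nu'(x)|$. $\pi(f)=\sum_x\pi(x)f(x)$. *)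

(* Defs.v *)
(* classical reals. State space Sigma = {0, ..., N-1}. *)
From Stdlib Require Import Reals List.
Import ListNotations.
Open Scope R_scope.

Fixpoint sumR (n : nat) (g : nat -> R) : R :=
  match n with O => 0 | S m => sumR m g + g m end.

(* min_{i<n} g i  (n >= 1) *)
Fixpoint minR (n : nat) (g : nat -> R) : R :=
  match n with
  | O => 0
  | S m => match m with O => g O | _ => Rmin (minR m g) (g m) end
  end.

Definition is_distribution (N : nat) (mu : nat -> R) : Prop :=
  (forall x, (x < N)%nat -> 0 <= mu x) /\ sumR N mu = 1.

Definition is_stochastic (N : nat) (P : nat -> nat -> R) : Prop :=
  (forall x y, (x < N)%nat -> (y < N)%nat -> 0 <= P x y) /\
  (forall x, (x < N)%nat -> sumR N (P x) = 1).

Fixpoint matpow (N : nat) (P : nat -> nat -> R) (n : nat) : nat -> nat -> R :=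
  match n with
  | O => fun x y => if Nat.eqb x y then 1 else 0
  | S m => fun x y => sumR N (fun z => matpow N P m x z * P z y)
  end.

Definition is_invariant (N : nat) (P : nat -> nat -> R) (pi : nat -> R) : Prop :=
  is_distribution N pi /\
  (forall y, (y < N)%nat -> sumR N (fun x => pi x * P x y) = pi y).

Definition tv (N : nat) (mu mu' : nat -> R) : R :=
  / 2 * sumR N (fun x => Rabs (mu x - mu' x)).

Definition mixed_at (N : nat) (P : nat -> nat -> R) (pi : nat -> R) (n : nat) : Prop :=
  forall x, (x < N)%nat -> tv N (matpow N P n x) pi <= / 4.

Definition is_mixing_time (N : nat) (P : nat -> nat -> R) (pi : nat -> R) (T : nat) : Prop :=
  mixed_at N P pi T /\ (forall m, (m < T)%nat -> ~ mixed_at N P pi m).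

Fixpoint all_paths (N n : nat) : list (list nat) :=
  match n with
  | O => [nil]
  | S m => flat_map (fun x => map (cons x) (all_paths N m)) (seq 0 N)
  end.

Fixpoint chain_weight (P : nat -> nat -> R) (x : nat) (rest : list nat) : R :=
  match rest with
  | nil => 1
  | y :: r => P x y * chain_weight P y r
  end.

Definition path_weight (nu : nat -> R) (P : nat -> nat -> R) (p : list nat) : R :=
  match p with
  | nil => 1
  | x :: r => nu x * chain_weight P x r
  end.

Definition path_sum (f : nat -> R) (p : list nat) : R :=
  fold_right (fun x acc => f x + acc) 0 p.

Definition prob_sum_ge (N : nat) (nu : nat -> R) (P : nat -> nat -> R)
  (f : nat -> R) (n : nat) (c : R) : R :=
  fold_right Rplus 0
    (map (fun p => path_weight nu P p * (if Rle_dec c (path_sum f p) then 1 else 0))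
         (all_paths N n)).

Definition pi_star (N : nat) (pi : nat -> R) : R := minR N pi.

Definition log2 (x : R) : R := ln x / ln 2.

Definition floorR (x : R) : R := IZR (Int_part x).

(* Main.v *)
From Stdlib Require Import Reals List Lra Lia Psatz ZArith.
From Coquelicot Require Import Coquelicot.
Require Import Defs.
From Stdlib Require Import Reals List.
Import ListNotations.
Open Scope R_scope.

Lemma sumR_ext n g h : (forall i, (i < n)%nat -> g i = h i) -> sumR n g = sumR n h.
Proof. induction n; simpl; intros H; auto. rewrite IHn by (intros; apply H; lia). rewrite H by lia. reflexivity. Qed.

Lemma sumR_le n g h : (forall i, (i < n)%nat -> g i <= h i) -> sumR n g <= sumR n h.
Proof. induction n; simpl; intros H; [lra|]. assert (g n <= h n) by (apply H; lia). assert (sumR n g <= sumR n h) by (apply IHn; intros; apply H; lia). lra. Qed.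

Lemma sumR_nonneg n g : (forall i, (i < n)%nat -> 0 <= g i) -> 0 <= sumR n g.
Proof. intros H. replace 0 with (sumR n (fun _ => 0)). apply sumR_le; auto. induction n; simpl; auto. rewrite IHn; [lra|]. intros; apply H; lia. Qed.

Lemma sumR_plus n g h : sumR n (fun i => g i + h i) = sumR n g + sumR n h.
Proof. induction n; simpl; [lra|]. rewrite IHn; lra. Qed.

Lemma sumR_scal n c g : sumR n (fun i => c * g i) = c * sumR n g.
Proof. induction n; simpl; [lra|]. rewrite IHn; lra. Qed.

Lemma sumR_scal_r n c g : sumR n (fun i => g i * c) = sumR n g * c.
Proof. induction n; simpl; [lra|]. rewrite IHn; lra. Qed.

Lemma sumR_opp n g : sumR n (fun i => - g i) = - sumR n g.
Proof. induction n; simpl; [lra|]. rewrite IHn; lra. Qed.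

Lemma sumR_minus n g h : sumR n (fun i => g i - h i) = sumR n g - sumR n h.
Proof. induction n; simpl; [lra|]. rewrite IHn; lra. Qed.

Lemma sumR_const n c : sumR n (fun _ => c) = INR n * c.
Proof. induction n; simpl sumR; [simpl; lra|]. rewrite IHn, S_INR; lra. Qed.

Lemma sumR_swap n m (F : nat -> nat -> R) :
  sumR n (fun i => sumR m (fun j => F i j)) = sumR m (fun j => sumR n (fun i => F i j)).
Proof. induction n; simpl. { induction m; simpl; auto. rewrite <- IHm; lra. }
  rewrite IHn, <- sumR_plus. reflexivity. Qed.

Lemma sumR_abs n g : Rabs (sumR n g) <= sumR n (fun i => Rabs (g i)).
Proof. induction n; simpl. rewrite Rabs_R0; lra. eapply Rle_trans; [apply Rabs_triang|]. lra. Qed.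

Lemma sumR_delta_l n y h : (y < n)%nat ->
  sumR n (fun x => (if Nat.eqb x y then 1 else 0) * h x) = h y.
Proof. induction n; intros Hy; [lia|]. simpl.
  destruct (Nat.eqb_spec n y).
  - subst. rewrite (sumR_ext _ _ (fun _ => 0)). rewrite sumR_const; lra.
    intros i Hi. destruct (Nat.eqb_spec i y); [lia|lra].
  - rewrite IHn by lia. lra. Qed.

Lemma sumR_delta_r n y h : (y < n)%nat ->
  sumR n (fun x => h x * (if Nat.eqb y x then 1 else 0)) = h y.
Proof. intros Hy. rewrite <- (sumR_delta_l n y h Hy). apply sumR_ext. intros i _.
  rewrite Nat.eqb_sym. lra. Qed.

Lemma sumR_ge_term n g i : (forall x, (x < n)%nat -> 0 <= g x) -> (i < n)%nat -> g i <= sumR n g.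
Proof. induction n; intros H Hi; [lia|]. simpl. destruct (Nat.eq_dec i n).
  - subst. assert (0 <= sumR n g) by (apply sumR_nonneg; intros; apply H; lia). lra.
  - assert (g i <= sumR n g) by (apply IHn; [intros; apply H; lia| lia]). assert (0 <= g n) by (apply H; lia). lra. Qed.

Definition lsum {A} (l : list A) (F : A -> R) : R := fold_right Rplus 0 (map F l).

Lemma lsum_app {A} (l1 l2 : list A) F : lsum (l1 ++ l2) F = lsum l1 F + lsum l2 F.
Proof. unfold lsum. induction l1; simpl; [lra|]. rewrite IHl1; lra. Qed.

Lemma lsum_flat_map {A B} (l : list A) (G : A -> list B) F :
  lsum (flat_map G l) F = lsum l (fun x => lsum (G x) F).
Proof. induction l; simpl; auto. rewrite lsum_app. unfold lsum in *; simpl. rewrite IHl; auto. Qed.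

Lemma lsum_map {A B} (l : list A) (h : A -> B) F : lsum (map h l) F = lsum l (fun x => F (h x)).
Proof. unfold lsum. rewrite map_map. auto. Qed.

Lemma lsum_seq N F : lsum (seq 0 N) F = sumR N F.
Proof. induction N; auto. rewrite seq_S, lsum_app, IHN. unfold lsum; simpl. lra. Qed.

Lemma lsum_ext {A} (l : list A) F G : (forall x, In x l -> F x = G x) -> lsum l F = lsum l G.
Proof. unfold lsum; induction l; simpl; intros H; auto. rewrite H, IHl; auto. Qed.

Lemma lsum_le {A} (l : list A) F G : (forall x, In x l -> F x <= G x) -> lsum l F <= lsum l G.
Proof. unfold lsum; induction l; simpl; intros H; [lra|].
  assert (F a <= G a) by auto. assert (fold_right Rplus 0 (map F l) <= fold_right Rplus 0 (map G l)) by auto. lra. Qed.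

Lemma lsum_scal {A} (l : list A) c F : lsum l (fun x => c * F x) = c * lsum l F.
Proof. unfold lsum; induction l; simpl; [lra|]. rewrite IHl; lra. Qed.

Lemma lsum_sumR {A} (l : list A) m (F : A -> nat -> R) :
  lsum l (fun p => sumR m (F p)) = sumR m (fun r => lsum l (fun p => F p r)).
Proof. unfold lsum; induction l; simpl. { induction m; simpl; auto. rewrite <- IHm; lra. }
  rewrite IHl, <- sumR_plus. reflexivity. Qed.

Lemma lsum_paths_S N m F :
  lsum (all_paths N (S m)) F = sumR N (fun x => lsum (all_paths N m) (fun q => F (x :: q))).
Proof. simpl. rewrite lsum_flat_map, lsum_seq. apply sumR_ext. intros. apply lsum_map. Qed.

Lemma all_paths_bound N n p : In p (all_paths N n) -> forall x, In x p -> (x < N)%nat.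
Proof. revert p; induction n; simpl; intros p Hp x Hx.
  - destruct Hp as [<-|[]]. destruct Hx.
  - apply in_flat_map in Hp. destruct Hp as [y [Hy Hp]]. apply in_map_iff in Hp.
    destruct Hp as [q [<- Hq]]. apply in_seq in Hy. destruct Hx as [<-|Hx]; [lia|]. eauto. Qed.

Fixpoint PS (g : nat -> nat -> R) (i : nat) (p : list nat) : R :=
  match p with nil => 0 | x :: q => g i x + PS g (S i) q end.

Fixpoint CW (P : nat -> nat -> R) (F : nat -> nat -> R) (i x : nat) (rest : list nat) : R :=
  match rest with nil => 1 | y :: r => P x y * F (S i) y * CW P F (S i) y r end.

Definition V N P F j i x := lsum (all_paths N j) (CW P F i x).

Lemma V_0 N P F i x : V N P F 0 i x = 1.
Proof. unfold V, lsum; simpl. lra. Qed.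

Lemma V_S N P F j i x : V N P F (S j) i x = sumR N (fun y => P x y * F (S i) y * V N P F j (S i) y).
Proof. unfold V. rewrite lsum_paths_S. apply sumR_ext. intros y _. simpl CW.
  apply lsum_scal. Qed.

Lemma cw_exp P g l i x q :
  chain_weight P x q * exp (l * PS g (S i) q) = CW P (fun t y => exp (l * g t y)) i x q.
Proof. revert i x; induction q as [|y r IH]; intros i x; simpl.
  - rewrite Rmult_0_r, exp_0; lra.
  - rewrite <- IH. rewrite Rmult_plus_distr_l, exp_plus. lra. Qed.

Lemma E_paths N nu P g l m :
  lsum (all_paths N (S m)) (fun p => path_weight nu P p * exp (l * PS g 0 p)) =
  sumR N (fun x => nu x * exp (l * g 0%nat x) * V N P (fun t y => exp (l * g t y)) m 0 x).
Proof. rewrite lsum_paths_S. apply sumR_ext. intros x _. unfold V.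
  rewrite <- lsum_scal. apply lsum_ext. intros q _. simpl path_weight. simpl PS.
  rewrite <- cw_exp. rewrite Rmult_plus_distr_l, exp_plus. lra. Qed.

Lemma path_sum_PS f p i : path_sum f p = PS (fun _ x => f x) i p.
Proof. revert i; induction p; simpl; intros; auto. rewrite (IHp (S i)). auto. Qed.

Lemma PS_sumR L G i p : sumR L (fun r => PS (G r) i p) = PS (fun t x => sumR L (fun r => G r t x)) i p.
Proof. revert i; induction p; simpl; intros. { induction L; simpl; auto. rewrite IHL; lra. }
  rewrite sumR_plus, IHp. auto. Qed.

Lemma class_sum L t v : (0 < L)%nat -> sumR L (fun r => if Nat.eqb (t mod L) r then v else 0) = v.
Proof. intros HL. assert (Hm : (t mod L < L)%nat) by (apply Nat.mod_upper_bound; lia).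
  transitivity (sumR L (fun x => (if Nat.eqb x (t mod L) then 1 else 0) * v)).
  - apply sumR_ext. intros r _. rewrite (Nat.eqb_sym (t mod L) r). destruct (Nat.eqb r (t mod L)); lra.
  - apply (sumR_delta_l L (t mod L) (fun _ => v) Hm). Qed.

Lemma V_ones N P F j i : is_stochastic N P ->
  (forall t y, (i < t <= i + j)%nat -> F t y = 1) -> forall x, (x < N)%nat -> V N P F j i x = 1.
Proof. intros HP. revert i; induction j; intros i HF x Hx. apply V_0.
  rewrite V_S. rewrite <- (proj2 HP x Hx). apply sumR_ext. intros y Hy.
  rewrite HF by lia. rewrite IHj; auto; [lra|]. intros; apply HF; lia. Qed.

Lemma matpow_1 N P x y : (x < N)%nat -> matpow N P 1 x y = P x y.
Proof. intros Hx. simpl. rewrite <- (sumR_delta_l N x (fun z => P z y)) by auto.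
  apply sumR_ext. intros z _. rewrite Nat.eqb_sym. auto. Qed.

Lemma V_split N P F i : forall s b x, (x < N)%nat ->
  (forall t y, (i < t < i + S s)%nat -> F t y = 1) ->
  V N P F (S s + b) i x =
  sumR N (fun y => matpow N P (S s) x y * F (i + S s)%nat y * V N P F b (i + S s)%nat y).
Proof. induction s; intros b x Hx HF.
  - simpl plus. rewrite V_S. apply sumR_ext. intros y _. rewrite matpow_1 by auto.
    replace (i + 1)%nat with (S i) by lia. auto.
  - replace (S (S s) + b)%nat with (S s + S b)%nat by lia.
    rewrite IHs by (auto; intros; apply HF; lia).
    transitivity (sumR N (fun y => matpow N P (S s) x y *
       sumR N (fun z => P y z * F (i + S (S s))%nat z * V N P F b (i + S (S s))%nat z))).
    + apply sumR_ext. intros y _. rewrite HF by lia. rewrite V_S.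
      replace (S (i + S s)) with (i + S (S s))%nat by lia. lra.
    + change (matpow N P (S (S s)) x) with (fun y => sumR N (fun z => matpow N P (S s) x z * P z y)).
      cbv beta.
      transitivity (sumR N (fun y => sumR N (fun z =>
         matpow N P (S s) x y * P y z * (F (i + S (S s))%nat z * V N P F b (i + S (S s))%nat z)))).
      { apply sumR_ext; intros. rewrite <- sumR_scal. apply sumR_ext; intros. lra. }
      rewrite sumR_swap. apply sumR_ext. intros z _. rewrite sumR_scal_r. lra. Qed.

Lemma matpow_nonneg N P : is_stochastic N P -> forall t x y, (y < N)%nat -> 0 <= matpow N P t x y.
Proof. intros HP t; induction t; intros x y Hy; simpl.
  - destruct (Nat.eqb x y); lra.
  - apply sumR_nonneg. intros z Hz. apply Rmult_le_pos; auto. apply (proj1 HP); auto. Qed.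

Lemma exp_le_exp x y : x <= y -> exp x <= exp y.
Proof. intros H. destruct (Rle_lt_or_eq_dec _ _ H). apply Rlt_le, exp_increasing; auto. subst; lra. Qed.

Definition gcl (L r : nat) (f : nat -> R) := fun t x => if Nat.eqb (t mod L) r then f x else 0.
Definition Fcl L r f l := fun t y => exp (l * gcl L r f t y).

Lemma Fcl_in L r f l t y : (t mod L = r)%nat -> Fcl L r f l t y = exp (l * f y).
Proof. intros H. unfold Fcl, gcl. rewrite H, Nat.eqb_refl. auto. Qed.
Lemma Fcl_out L r f l t y : (t mod L <> r)%nat -> Fcl L r f l t y = 1.
Proof. intros H. unfold Fcl, gcl. apply Nat.eqb_neq in H. rewrite H, Rmult_0_r, exp_0. auto. Qed.

Lemma mod_shift L i d : (0 < d < L)%nat -> ((i + d) mod L <> i mod L)%nat.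
Proof. intros Hd E. assert (L <> 0)%nat by lia.
  pose proof (Nat.div_mod i L H). pose proof (Nat.div_mod (i+d) L H).
  set (a := (i / L)%nat) in *. set (b := ((i + d) / L)%nat) in *.
  rewrite E in H1. assert (L * a + d = L * b)%nat by lia.
  destruct (Nat.le_gt_cases b a). { assert (L * b <= L * a)%nat by nia. lia. }
  assert (L * (a + 1) <= L * b)%nat by nia. lia. Qed.

Lemma exp_l_ge1 l : 0 <= l -> 1 <= exp l.
Proof. intros. pose proof (exp_ineq1_le l). lra. Qed.

Lemma aligned N P L r f l K : is_stochastic N P -> (0 < L)%nat -> 0 <= K ->
  (forall x, (x < N)%nat -> sumR N (fun y => matpow N P L x y * exp (l * f y)) <= exp K) ->
  forall j i x, (i mod L = r)%nat -> (x < N)%nat ->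
  V N P (Fcl L r f l) j i x <= exp (K * INR (j / L)).
Proof. intros HP HL HK Hstep j. induction j as [j IH] using (well_founded_induction Wf_nat.lt_wf). intros i x Hi Hx.
  destruct (Nat.lt_ge_cases j L) as [Hj|Hj].
  - rewrite V_ones; auto. rewrite Nat.div_small by auto. simpl. rewrite Rmult_0_r, exp_0. lra.
    intros t y Ht. apply Fcl_out. replace t with (i + (t - i))%nat by lia. rewrite <- Hi.
    apply mod_shift. lia.
  - destruct L as [|s]; [lia|].
    replace j with (S s + (j - S s))%nat by lia.
    rewrite V_split; auto.
    2:{ intros t y Ht. apply Fcl_out. replace t with (i + (t - i))%nat by lia. rewrite <- Hi.
        apply mod_shift. lia. }
    assert (Hm : ((i + S s) mod S s = r)%nat).
    { replace (i + S s)%nat with (i + 1 * S s)%nat by lia. rewrite Nat.Div0.mod_add. auto. }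
    set (b := (j - S s)%nat).
    assert (Hb : (b < j)%nat) by lia.
    apply Rle_trans with (sumR N (fun y => matpow N P (S s) x y * exp (l * f y)) * exp (K * INR (b / S s))).
    + rewrite <- sumR_scal_r. apply sumR_le. intros y Hy. rewrite Fcl_in by auto.
      apply Rmult_le_compat_l. apply Rmult_le_pos. apply matpow_nonneg; auto. apply Rlt_le, exp_pos.
      apply IH; auto.
    + replace (S s + b)%nat with (b + 1 * S s)%nat by lia. rewrite Nat.div_add by lia.
      rewrite plus_INR. simpl INR. rewrite Rmult_plus_distr_l, Rmult_1_r, exp_plus.
      rewrite Rmult_comm. apply Rmult_le_compat_l. apply Rlt_le, exp_pos. apply Hstep; auto. Qed.

Lemma exp_lf_le N f l y : (forall x, (x < N)%nat -> -1 <= f x <= 1) -> 0 <= l -> (y < N)%nat ->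
  exp (l * f y) <= exp l.
Proof. intros Hf Hl Hy. destruct (Hf y Hy). apply exp_le_exp. nra. Qed.

Lemma nonaligned N P L r f l K : is_stochastic N P -> (0 < L)%nat -> 0 <= K -> 0 <= l ->
  (forall x, (x < N)%nat -> -1 <= f x <= 1) ->
  (forall x, (x < N)%nat -> sumR N (fun y => matpow N P L x y * exp (l * f y)) <= exp K) ->
  forall j i x, (x < N)%nat ->
  V N P (Fcl L r f l) j i x <= exp l * exp (K * INR (j / L)).
Proof. intros HP HL HK Hl Hf Hstep j. induction j; intros i x Hx.
  - rewrite V_0. rewrite Nat.Div0.div_0_l by lia. simpl. rewrite Rmult_0_r, exp_0. pose proof (exp_l_ge1 l Hl). lra.
  - rewrite V_S.
    assert (Hmono : exp (K * INR (j / L)) <= exp (K * INR (S j / L))).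
    { apply exp_le_exp. apply Rmult_le_compat_l; auto. apply le_INR. apply Nat.Div0.div_le_mono; lia. }
    apply Rle_trans with (sumR N (fun y => P x y * (exp l * exp (K * INR (S j / L))))).
    + apply sumR_le. intros y Hy. rewrite Rmult_assoc. apply Rmult_le_compat_l. apply (proj1 HP); auto.
      destruct (Nat.eq_dec (S i mod L) r) as [E|E].
      * rewrite Fcl_in by auto.
        apply Rle_trans with (exp (l * f y) * exp (K * INR (S j / L))).
        -- apply Rmult_le_compat_l. apply Rlt_le, exp_pos.
           eapply Rle_trans; [apply (aligned N P L r f l K HP HL HK Hstep j (S i) y E Hy)|]. auto.
        -- apply Rmult_le_compat_r. apply Rlt_le, exp_pos. apply exp_lf_le with N; auto.
      * rewrite Fcl_out by auto. rewrite Rmult_1_l. eapply Rle_trans; [apply IHj; auto|].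
        apply Rmult_le_compat_l; auto. apply Rlt_le, exp_pos.
    + rewrite sumR_scal_r, (proj2 HP x Hx). lra.
Qed.

Lemma top_bound N P nu L r f l K m : is_stochastic N P -> is_distribution N nu -> (0 < L)%nat -> 0 <= K -> 0 <= l ->
  (forall x, (x < N)%nat -> -1 <= f x <= 1) ->
  (forall x, (x < N)%nat -> sumR N (fun y => matpow N P L x y * exp (l * f y)) <= exp K) ->
  lsum (all_paths N (S m)) (fun p => path_weight nu P p * exp (l * PS (gcl L r f) 0 p))
  <= exp l * exp (K * INR (m / L)).
Proof. intros HP Hnu HL HK Hl Hf Hstep. rewrite E_paths.
  apply Rle_trans with (sumR N (fun x => nu x * (exp l * exp (K * INR (m / L))))).
  - apply sumR_le. intros x Hx. rewrite Rmult_assoc. apply Rmult_le_compat_l. apply (proj1 Hnu); auto.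
    change (fun t y => exp (l * gcl L r f t y)) with (Fcl L r f l).
    destruct (Nat.eq_dec (0 mod L) r) as [E|E].
    + unfold gcl at 1. rewrite E, Nat.eqb_refl.
      apply Rle_trans with (exp (l * f x) * exp (K * INR (m / L))).
      * apply Rmult_le_compat_l. apply Rlt_le, exp_pos. apply aligned; auto.
      * apply Rmult_le_compat_r. apply Rlt_le, exp_pos. apply exp_lf_le with N; auto.
    + unfold gcl at 1. apply Nat.eqb_neq in E. rewrite E, Rmult_0_r, exp_0, Rmult_1_l.
      apply nonaligned; auto.
  - rewrite sumR_scal_r, (proj2 Hnu). lra. Qed.

Lemma matpow_stoch N P : is_stochastic N P -> forall t x, (x < N)%nat -> sumR N (matpow N P t x) = 1.
Proof. intros HP t; induction t; intros x Hx.
  - simpl. transitivity (sumR N (fun y => (if Nat.eqb y x then 1 else 0) * 1)).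
    + apply sumR_ext; intros. rewrite Nat.eqb_sym. lra.
    + apply (sumR_delta_l N x (fun _ => 1)); auto.
  - simpl. transitivity (sumR N (fun y => sumR N (fun z => matpow N P t x z * P z y))); auto.
    rewrite sumR_swap. rewrite <- (IHt x Hx). apply sumR_ext. intros z Hz.
    rewrite sumR_scal, (proj2 HP z Hz). lra. Qed.

Lemma CK N P a : forall b x z, (z < N)%nat ->
  matpow N P (a + b) x z = sumR N (fun y => matpow N P a x y * matpow N P b y z).
Proof. induction b; intros x z Hz.
  - rewrite Nat.add_0_r. simpl. symmetry.
    transitivity (sumR N (fun y => matpow N P a x y * (if Nat.eqb z y then 1 else 0))).
    apply sumR_ext; intros; rewrite Nat.eqb_sym; auto. apply sumR_delta_r; auto.
  - replace (a + S b)%nat with (S (a + b)) by lia. simpl.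
    transitivity (sumR N (fun w => sumR N (fun y => matpow N P a x y * matpow N P b y w) * P w z)).
    { apply sumR_ext. intros w Hw. rewrite IHb; auto. }
    transitivity (sumR N (fun w => sumR N (fun y => matpow N P a x y * (matpow N P b y w * P w z)))).
    { apply sumR_ext. intros. rewrite <- sumR_scal_r. apply sumR_ext. intros. lra. }
    rewrite sumR_swap. apply sumR_ext. intros. apply sumR_scal. Qed.

Definition uu N P g t x := sumR N (fun z => matpow N P t x z * g z).

Lemma uu_add N P g a t x : uu N P g (a + t) x = sumR N (fun y => matpow N P a x y * uu N P g t y).
Proof. unfold uu.
  transitivity (sumR N (fun z => sumR N (fun y => matpow N P a x y * (matpow N P t y z * g z)))).
  { apply sumR_ext. intros z Hz. rewrite CK; auto. rewrite <- sumR_scal_r. apply sumR_ext. intros; lra. }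
  rewrite sumR_swap. apply sumR_ext. intros. apply sumR_scal. Qed.

Lemma inv_pow N P pi : is_invariant N P pi -> forall t y, (y < N)%nat ->
  sumR N (fun x => pi x * matpow N P t x y) = pi y.
Proof. intros Hpi t; induction t; intros y Hy.
  - simpl. transitivity (sumR N (fun x => pi x * (if Nat.eqb y x then 1 else 0))).
    apply sumR_ext; intros; rewrite Nat.eqb_sym; auto. apply sumR_delta_r; auto.
  - simpl. transitivity (sumR N (fun x => sumR N (fun z => pi x * matpow N P t x z * P z y))).
    { apply sumR_ext. intros. rewrite <- sumR_scal. apply sumR_ext. intros; lra. }
    rewrite sumR_swap. rewrite <- (proj2 Hpi y Hy). apply sumR_ext. intros z Hz.
    rewrite sumR_scal_r, IHt; auto. Qed.

Lemma pi_uu N P pi g t : is_invariant N P pi ->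
  sumR N (fun x => pi x * uu N P g t x) = sumR N (fun z => pi z * g z).
Proof. intros Hpi. unfold uu.
  transitivity (sumR N (fun x => sumR N (fun z => pi x * matpow N P t x z * g z))).
  { apply sumR_ext. intros. rewrite <- sumR_scal. apply sumR_ext. intros; lra. }
  rewrite sumR_swap. apply sumR_ext. intros z Hz. rewrite sumR_scal_r, inv_pow; auto. Qed.

Lemma minR_spec N g : (0 < N)%nat ->
  (forall i, (i < N)%nat -> minR N g <= g i) /\ exists i, (i < N)%nat /\ minR N g = g i.
Proof. induction N; intros HN; [lia|]. destruct N.
  - simpl. split. intros i Hi. replace i with 0%nat by lia. lra. exists 0%nat; split; auto.
  - destruct IHN as [H1 [i0 [Hi0 E]]]; [lia|].
    change (minR (S (S N)) g) with (Rmin (minR (S N) g) (g (S N))).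
    split.
    + intros i Hi. destruct (Nat.eq_dec i (S N)). subst. apply Rmin_r.
      eapply Rle_trans; [apply Rmin_l|]. apply H1; lia.
    + destruct (Rle_dec (minR (S N) g) (g (S N))).
      * exists i0. split; [lia|]. rewrite Rmin_left; auto.
      * exists (S N). split; [lia|]. rewrite Rmin_right; lra. Qed.

Lemma contraction N P pi T h a w : is_stochastic N P -> mixed_at N P pi T -> 0 <= w ->
  (forall y, (y < N)%nat -> a <= h y <= a + w) ->
  forall x x', (x < N)%nat -> (x' < N)%nat ->
  sumR N (fun y => matpow N P T x y * h y) - sumR N (fun y => matpow N P T x' y * h y) <= / 2 * w.
Proof. intros HP HT Hw Hh x x' Hx Hx'.
  set (c := a + w / 2).
  assert (E : sumR N (fun y => matpow N P T x y * h y) - sumR N (fun y => matpow N P T x' y * h y)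
     = sumR N (fun y => (matpow N P T x y - matpow N P T x' y) * (h y - c))).
  { rewrite <- sumR_minus.
    transitivity (sumR N (fun y => (matpow N P T x y - matpow N P T x' y) * (h y - c)
                              + c * (matpow N P T x y - matpow N P T x' y))).
    apply sumR_ext; intros; ring.
    rewrite sumR_plus, sumR_scal, sumR_minus, !matpow_stoch; auto. ring. }
  rewrite E.
  apply Rle_trans with (sumR N (fun y => Rabs (matpow N P T x y - pi y) * (w / 2)
                                     + Rabs (matpow N P T x' y - pi y) * (w / 2))).
  - apply sumR_le. intros y Hy. specialize (Hh y Hy).
    assert (Rabs (h y - c) <= w / 2) by (apply Rabs_le; unfold c; lra).
    eapply Rle_trans; [apply Rle_abs|]. rewrite Rabs_mult.
    apply Rle_trans with (Rabs (matpow N P T x y - matpow N P T x' y) * (w / 2)).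
    apply Rmult_le_compat_l; auto. apply Rabs_pos.
    rewrite <- Rmult_plus_distr_r. apply Rmult_le_compat_r. lra.
    replace (matpow N P T x y - matpow N P T x' y) with ((matpow N P T x y - pi y) - (matpow N P T x' y - pi y)) by ring.
    eapply Rle_trans; [apply Rabs_triang|]. rewrite Rabs_Ropp. lra.
  - rewrite sumR_plus, !sumR_scal_r. pose proof (HT x Hx). pose proof (HT x' Hx'). unfold tv in *. nra. Qed.

Lemma iterate N P pi T g a0 w0 : is_stochastic N P -> mixed_at N P pi T -> (0 < N)%nat -> 0 <= w0 ->
  (forall y, (y < N)%nat -> a0 <= g y <= a0 + w0) ->
  forall i, exists a, forall x, (x < N)%nat -> a <= uu N P g (i * T) x <= a + (/2)^i * w0.
Proof. intros HP HT HN Hw Hg i. induction i.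
  - exists a0. intros x Hx. simpl. unfold uu. simpl.
    replace (sumR N (fun z => (if Nat.eqb x z then 1 else 0) * g z)) with (g x).
    specialize (Hg x Hx). lra. symmetry. transitivity (sumR N (fun z => (if Nat.eqb z x then 1 else 0) * g z)).
    apply sumR_ext; intros; rewrite Nat.eqb_sym; auto. apply sumR_delta_l; auto.
  - destruct IHi as [a Ha]. set (G := fun x => sumR N (fun y => matpow N P T x y * uu N P g (i * T) y)).
    destruct (minR_spec N G HN) as [H1 [x0 [Hx0 E]]].
    exists (minR N G). intros x Hx. change (S i * T)%nat with (T + i * T)%nat. rewrite uu_add.
    fold (G x). split; auto. rewrite E.
    assert (0 <= (/2)^i * w0) by (apply Rmult_le_pos; auto; apply pow_le; lra).
    pose proof (contraction N P pi T (uu N P g (i * T)) a ((/2)^i * w0) HP HT H Ha x x0 Hx Hx0).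
    unfold G. simpl pow. lra. Qed.

Lemma mix_bound N P pi T g a0 w0 j : is_stochastic N P -> is_invariant N P pi -> mixed_at N P pi T ->
  (0 < N)%nat -> 0 <= w0 ->
  (forall y, (y < N)%nat -> a0 <= g y <= a0 + w0) ->
  forall x, (x < N)%nat ->
  sumR N (fun y => matpow N P (j * T) x y * g y) <= sumR N (fun z => pi z * g z) + (/2)^j * w0.
Proof. intros HP Hpi HT HN Hw Hg x Hx.
  destruct (iterate N P pi T g a0 w0 HP HT HN Hw Hg j) as [a Ha].
  fold (uu N P g (j * T) x). rewrite <- (pi_uu N P pi g (j * T) Hpi).
  assert (a <= sumR N (fun x => pi x * uu N P g (j * T) x)).
  { apply Rle_trans with (sumR N (fun x => pi x * a)).
    rewrite sumR_scal_r, (proj2 (proj1 Hpi)). lra.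
    apply sumR_le. intros. apply Rmult_le_compat_l. apply (proj1 (proj1 Hpi)); auto. apply Ha; auto. }
  specialize (Ha x Hx). lra. Qed.

Lemma mono_deriv f f' a b : a <= b ->
  (forall c, a <= c <= b -> derivable_pt_lim f c (f' c)) ->
  (forall c, a <= c <= b -> 0 <= f' c) -> f a <= f b.
Proof. intros Hab Hd Hp. destruct (Rle_lt_or_eq_dec _ _ Hab) as [H|H]; [|subst; lra].
  destruct (MVT_cor2 f f' a b H Hd) as [c [E Hc]].
  assert (0 <= f' c) by (apply Hp; lra). nra. Qed.

Definition psi2 x := exp x - 1 - x - x^2/2.
Definition psi3 x := exp x - 1 - x - x^2/2 - x^3/6.

Lemma d_psi2 x : derivable_pt_lim psi2 x (exp x - 1 - x).
Proof. apply is_derive_Reals. unfold psi2. auto_derive; auto. field. Qed.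
Lemma d_psi3 x : derivable_pt_lim psi3 x (psi2 x).
Proof. apply is_derive_Reals. unfold psi3, psi2. auto_derive; auto. field. Qed.
Lemma d_mpsi3 x : derivable_pt_lim (fun y => - psi3 y) x (- psi2 x).
Proof. apply is_derive_Reals. unfold psi3, psi2. auto_derive; auto. field. Qed.

Lemma psi2_0 : psi2 0 = 0. Proof. unfold psi2. rewrite exp_0. field. Qed.
Lemma psi3_0 : psi3 0 = 0. Proof. unfold psi3. rewrite exp_0. field. Qed.

Lemma psi2_mono a b : a <= b -> psi2 a <= psi2 b.
Proof. intros H. apply (mono_deriv psi2 (fun x => exp x - 1 - x)); auto.
  intros; apply d_psi2. intros c _. pose proof (exp_ineq1_le c). lra. Qed.

Lemma psi3_nonneg x : 0 <= psi3 x.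
Proof. destruct (Rle_dec 0 x).
  - rewrite <- psi3_0. apply (mono_deriv psi3 psi2); auto. intros; apply d_psi3.
    intros c Hc. rewrite <- psi2_0. apply psi2_mono. lra.
  - assert (- psi3 x <= - psi3 0).
    { apply (mono_deriv (fun y => - psi3 y) (fun y => - psi2 y)); [lra| |].
      intros; apply d_mpsi3. intros c Hc. assert (psi2 c <= psi2 0) by (apply psi2_mono; lra).
      rewrite psi2_0 in H. lra. }
    rewrite psi3_0 in H. lra. Qed.

Lemma exp_lower3 x : 1 + x + x^2/2 + x^3/6 <= exp x.
Proof. pose proof (psi3_nonneg x). unfold psi3 in H. lra. Qed.

Lemma exp_quad u : -/2 <= u <= /2 -> exp u <= 1 + u + 7/10 * u^2.
Proof. intros Hu. destruct (Rle_dec u 0).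
  - assert (psi2 u <= psi2 0) by (apply psi2_mono; lra). rewrite psi2_0 in H. unfold psi2 in H. nra.
  - pose proof (exp_lower3 (- u)). set (q := 1 + - u + (- u)^2/2 + (- u)^3/6) in H.
    assert (Hq : 0 < q) by (unfold q; nra).
    assert (exp u = / exp (- u)) by (rewrite exp_Ropp, Rinv_inv; auto).
    rewrite H0. assert (0 < exp (-u)) by apply exp_pos.
    assert ((1 + u + 7/10 * u^2) * q >= 1).
    { unfold q. assert (0 <= u) by lra.
      assert (0 <= u^2 * (3/10 - 7/15 * u + 7/30 * u^2 - 7/60 * u^3)).
      { apply Rmult_le_pos. nra. nra. }
      nra. }
    apply Rle_trans with (/ q). apply Rinv_le_contravar; auto.
    apply (Rmult_le_reg_r q); auto. rewrite Rinv_l by lra. nra. Qed.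

Lemma exp_half_up : exp (/2) <= 1675/1000.
Proof. pose proof (exp_quad (/2)). lra. Qed.
Lemma exp_half_low : 604/1000 <= exp (- /2).
Proof. pose proof (exp_lower3 (- /2)). lra. Qed.

Lemma ln4_ge : / 2 <= ln 4.
Proof. rewrite <- (ln_exp (/2)). destruct (Rle_lt_or_eq_dec _ _ (Rlt_le _ _ (Rle_lt_trans _ _ 4 exp_half_up ltac:(lra)))) as [H|H].
  apply Rlt_le, ln_increasing; auto. apply exp_pos. rewrite H; lra. Qed.

Lemma jensen L xs : (0 < L)%nat -> exp (sumR L xs / INR L) <= sumR L (fun r => exp (xs r)) / INR L.
Proof. intros HL. assert (0 < INR L) by (apply lt_0_INR; auto).
  set (A := sumR L xs / INR L).
  assert (sumR L (fun r => exp A * (1 + (xs r - A))) <= sumR L (fun r => exp (xs r))).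
  { apply sumR_le. intros r _. replace (xs r) with (A + (xs r - A)) at 2 by ring. rewrite exp_plus.
    apply Rmult_le_compat_l. apply Rlt_le, exp_pos. apply exp_ineq1_le. }
  rewrite sumR_scal, sumR_plus, sumR_minus, !sumR_const in H0.
  replace (INR L * 1 + (sumR L xs - INR L * A)) with (INR L) in H0 by (unfold A; field; lra).
  apply (Rmult_le_reg_r (INR L)); auto. unfold Rdiv. rewrite Rmult_assoc, Rinv_l by lra. lra. Qed.

Lemma PS_ext g g' i p : (forall t x, g t x = g' t x) -> PS g i p = PS g' i p.
Proof. revert i; induction p; simpl; intros; auto. rewrite H, IHp; auto. Qed.

Lemma cw_nonneg N P x q : is_stochastic N P -> (x < N)%nat -> (forall y, In y q -> (y < N)%nat) ->
  0 <= chain_weight P x q.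
Proof. intros HP. revert x; induction q; intros x Hx Hq; simpl. lra.
  apply Rmult_le_pos. apply (proj1 HP); auto. apply Hq; simpl; auto.
  apply IHq. apply Hq; simpl; auto. intros; apply Hq; simpl; auto. Qed.

Lemma pw_nonneg N nu P n p : is_stochastic N P -> is_distribution N nu -> In p (all_paths N n) ->
  0 <= path_weight nu P p.
Proof. intros HP Hnu Hp. pose proof (all_paths_bound N n p Hp) as Hb. destruct p; simpl. lra.
  apply Rmult_le_pos. apply (proj1 Hnu). apply Hb; simpl; auto.
  apply (cw_nonneg N); auto. apply Hb; simpl; auto. intros; apply Hb; simpl; auto. Qed.

Lemma chernoff N P nu f L l K m c : is_stochastic N P -> is_distribution N nu -> (0 < L)%nat ->
  0 <= K -> 0 <= l ->
  (forall x, (x < N)%nat -> -1 <= f x <= 1) ->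
  (forall x, (x < N)%nat -> sumR N (fun y => matpow N P L x y * exp (l * f y)) <= exp K) ->
  prob_sum_ge N nu P f (S m) c <= exp (- (l / INR L) * c) * (exp l * exp (K * INR (m / L))).
Proof. intros HP Hnu HL HK Hl Hf Hstep. assert (HLr : 0 < INR L) by (apply lt_0_INR; auto).
  set (th := l / INR L).
  assert (Hth : 0 <= th) by (unfold th; apply Rmult_le_pos; auto; apply Rlt_le, Rinv_0_lt_compat; auto).
  change (prob_sum_ge N nu P f (S m) c) with
    (lsum (all_paths N (S m)) (fun p => path_weight nu P p * (if Rle_dec c (path_sum f p) then 1 else 0))).
  apply Rle_trans with (lsum (all_paths N (S m)) (fun p =>
     exp (- th * c) * / INR L * sumR L (fun r => path_weight nu P p * exp (l * PS (gcl L r f) 0 p)))).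
  - apply lsum_le. intros p Hp. pose proof (pw_nonneg N nu P _ p HP Hnu Hp).
    rewrite sumR_scal. rewrite <- Rmult_assoc. rewrite (Rmult_comm _ (path_weight nu P p)).
    rewrite !Rmult_assoc. apply Rmult_le_compat_l; auto.
    apply Rle_trans with (exp (th * (path_sum f p - c))).
    + destruct (Rle_dec c (path_sum f p)). apply exp_l_ge1. nra. apply Rlt_le, exp_pos.
    + replace (th * (path_sum f p - c)) with (- th * c + sumR L (fun r => INR L * th * PS (gcl L r f) 0 p) / INR L).
      2:{ rewrite sumR_scal. rewrite PS_sumR. rewrite (path_sum_PS f p 0).
          rewrite (PS_ext _ (fun _ x => f x)). field. lra. intros t x. apply class_sum; auto. }
      rewrite exp_plus. apply Rmult_le_compat_l. apply Rlt_le, exp_pos.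
      eapply Rle_trans. apply jensen; auto. unfold Rdiv. rewrite Rmult_comm. apply Rmult_le_compat_l.
      apply Rlt_le, Rinv_0_lt_compat; auto. apply Req_le. apply sumR_ext. intros. f_equal. f_equal. unfold th. field. lra.
  - rewrite lsum_scal, lsum_sumR.
    apply Rle_trans with (exp (- th * c) * / INR L * sumR L (fun _ => exp l * exp (K * INR (m / L)))).
    + apply Rmult_le_compat_l. apply Rmult_le_pos. apply Rlt_le, exp_pos. apply Rlt_le, Rinv_0_lt_compat; auto.
      apply sumR_le. intros r _. apply top_bound; auto.
    + rewrite sumR_const. unfold th. apply Req_le. field. lra. Qed.

Lemma sumR_mono_n g m n : (forall i, (i < n)%nat -> 0 <= g i) -> (m <= n)%nat -> sumR m g <= sumR n g.
Proof. intros Hg H. induction H. lra. simpl. assert (0 <= g m0) by (apply Hg; lia).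
  assert (sumR m g <= sumR m0 g) by (apply IHle; intros; apply Hg; lia). lra. Qed.

Lemma prob_le1 N P nu f m c : is_stochastic N P -> is_distribution N nu ->
  (forall x, (x < N)%nat -> -1 <= f x <= 1) -> prob_sum_ge N nu P f (S m) c <= 1.
Proof. intros HP Hnu Hf.
  eapply Rle_trans. apply (chernoff N P nu f 1 0 0 m c); auto; try lra.
  intros x Hx. rewrite (sumR_ext _ _ (fun y => matpow N P 1 x y * 1)).
  rewrite sumR_scal_r, matpow_stoch, exp_0; auto; lra.
  intros; rewrite Rmult_0_l, exp_0; auto.
  replace (-(0 / INR 1) * c) with 0 by (unfold Rdiv; ring). rewrite Rmult_0_l, !exp_0. lra. Qed.

Theorem theoremA1 (N : nat) (P : nat -> nat -> R) (nu pi : nat -> R) (T : nat)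
  (HN : (0 < N)%nat)
  (HP : is_stochastic N P)
  (Hnu : is_distribution N nu)
  (Hpi : is_invariant N P pi)
  (HT : is_mixing_time N P pi T)
  (n : nat) (Hn : (1 <= n)%nat)
  (f : nat -> R) (Hf : forall x, (x < N)%nat -> -1 <= f x <= 1)
  (sigma gamma : R)
  (Hmean : sumR N (fun x => pi x * f x) = 0)
  (Hvar : sumR N (fun x => pi x * (f x)^2) <= sigma^2)
  (Hgpos : 0 < gamma) (Hgs : gamma <= sigma^2) (Hgh : gamma <= / 2) :
  let k := - log2 (pi_star N pi * gamma^2 / (6 * sigma^2)) in
  prob_sum_ge N nu P f n (INR n * gamma)
  <= 4 * exp (- (floorR (INR n / (k * INR T) - 1) * (gamma^2 / (6 * sigma^2)))).
Proof.
  intros k. destruct n as [|m]; [lia|].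
  set (s2 := sigma^2) in *. assert (Hs2 : 0 < s2) by lra.
  set (ps := pi_star N pi).
  assert (Hps0 : 0 <= ps).
  { unfold ps, pi_star. destruct (minR_spec N pi HN) as [_ [i [Hi ->]]]. apply (proj1 (proj1 Hpi)); auto. }
  assert (Hfl : forall x, floorR x <= x) by (intros; unfold floorR; apply base_Int_part).
  assert (Hc6 : 0 < gamma^2 / (6 * s2)) by (apply Rdiv_lt_0_compat; nra).
  pose proof (prob_le1 N P nu f m (INR (S m) * gamma) HP Hnu Hf) as Hle1.
  destruct (Nat.eq_dec T 0) as [HT0|HT0].
  {
    subst T. change (INR 0) with 0. rewrite Rmult_0_r, Rdiv_0_r.
    pose proof (Hfl (0 - 1)). assert (1 <= exp (- (floorR (0 - 1) * (gamma ^ 2 / (6 * s2))))).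
    apply exp_l_ge1. assert (floorR (0-1) * (gamma ^ 2 / (6 * s2)) <= -1 * (gamma ^ 2 / (6 * s2))) by (apply Rmult_le_compat_r; lra). lra. lra. }
  destruct (Rle_lt_dec ps 0) as [Hps|Hps].
  { assert (ps = 0) by lra. unfold k. fold ps. rewrite H. unfold log2.
    replace (0 * gamma ^ 2 / (6 * s2)) with 0 by (unfold Rdiv; ring).
    replace (ln 0) with 0 by (unfold ln; destruct (Rlt_dec 0 0) as [h|h]; [exfalso; lra | reflexivity]).
    replace (- (0 / ln 2) * INR T) with 0 by (unfold Rdiv; ring). rewrite Rdiv_0_r.
    pose proof (Hfl (0 - 1)). assert (1 <= exp (- (floorR (0 - 1) * (gamma ^ 2 / (6 * s2))))).
    apply exp_l_ge1. assert (floorR (0-1) * (gamma ^ 2 / (6 * s2)) <= -1 * (gamma ^ 2 / (6 * s2))) by (apply Rmult_le_compat_r; lra). lra. lra. }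

  assert (HT1 : (1 <= T)%nat) by lia.
  assert (HN2 : (2 <= N)%nat).
  { destruct (Nat.eq_dec N 1) as [E|E]; [|lia]. exfalso. subst N.
    apply (proj2 HT 0%nat); [lia|]. intros x Hx. replace x with 0%nat by lia.
    unfold tv. simpl. pose proof (proj2 (proj1 Hpi)). simpl in H. rewrite Rplus_0_l in H. rewrite H.
    replace (1 - 1) with 0 by ring. rewrite Rabs_R0. lra. }
  assert (Hps2 : ps <= / 2).
  { unfold ps, pi_star. destruct (minR_spec N pi HN) as [H1 _].
    pose proof (H1 0%nat ltac:(lia)). pose proof (H1 1%nat ltac:(lia)).
    assert (sumR 2 pi <= sumR N pi).
    { apply sumR_mono_n; auto. intros i Hi. apply (proj1 (proj1 Hpi)); auto. }
    rewrite (proj2 (proj1 Hpi)) in H2. simpl in H2. lra. }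

  set (g := gamma^2 / s2).
  assert (Hg0 : 0 < g) by (unfold g; apply Rdiv_lt_0_compat; nra).
  assert (Hg1 : g <= gamma).
  { unfold g. apply (Rmult_le_reg_r s2); auto. unfold Rdiv. rewrite Rmult_assoc, Rinv_l by lra. nra. }
  set (X := ps * gamma ^ 2 / (6 * s2)).
  assert (HX : X = ps * g / 6) by (unfold X, g; field; lra).
  assert (HX0 : 0 < X) by (rewrite HX; nra).
  assert (HX1 : X <= / 16) by (rewrite HX; nra).
  assert (Hln2 : 0 < ln 2) by (rewrite <- ln_1; apply ln_increasing; lra).
  assert (Hk : k = - (ln X / ln 2)) by reflexivity.
  assert (Hk4 : 4 <= k).
  { assert (ln X <= ln (/ 16)).
    { destruct (Rle_lt_or_eq_dec _ _ HX1) as [h|h]. apply Rlt_le, ln_increasing; auto. rewrite h; lra. }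
    rewrite ln_Rinv in H by lra. replace 16 with (2 ^ 4) in H by ring. rewrite ln_pow in H by lra.
    simpl INR in H. rewrite Hk. apply (Rmult_le_reg_r (ln 2)); auto.
    replace (- (ln X / ln 2) * ln 2) with (- ln X) by (field; lra). lra. }
  assert (HkX : k * ln 2 = - ln X) by (rewrite Hk; field; lra).
  pose proof (archimed k) as [Hup1 Hup2].
  set (j := Z.to_nat (up k)).
  assert (Hj : INR j = IZR (up k)).
  { unfold j. rewrite INR_IZR_INZ, Z2Nat.id; auto. apply le_IZR. lra. }
  assert (Hj1 : (1 <= j)%nat). { apply INR_le. rewrite Hj. simpl. lra. }
  assert (Hhalf : (/ 2) ^ j <= X).
  { rewrite <- (exp_ln ((/2)^j)) by (apply pow_lt; lra).
    rewrite ln_pow, ln_Rinv by lra. rewrite <- (exp_ln X) by lra.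
    apply exp_le_exp. assert (0 <= (INR j - k) * ln 2) by (apply Rmult_le_pos; lra). lra. }
  set (l := gamma / (2 * s2)).
  assert (Hl0 : 0 < l) by (unfold l; apply Rdiv_lt_0_compat; lra).
  assert (Hl1 : l <= / 2).
  { unfold l. apply (Rmult_le_reg_r (2 * s2)). lra. unfold Rdiv. rewrite Rmult_assoc, Rinv_l by lra. lra. }
  set (K := 27 / 100 * g).
  assert (HL : (0 < j * T)%nat) by lia.
  assert (Hstep : forall x, (x < N)%nat ->
     sumR N (fun y => matpow N P (j * T) x y * exp (l * f y)) <= exp K).
  { intros x Hx.
    eapply Rle_trans.
    { apply (mix_bound N P pi T (fun y => exp (l * f y)) (exp (- l)) (exp l - exp (- l)) j HP Hpi (proj1 HT) HN).
      assert (exp (-l) <= exp l) by (apply exp_le_exp; lra). lra.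
      intros y Hy. destruct (Hf y Hy). split. apply exp_le_exp. nra.
      replace (exp (- l) + (exp l - exp (- l))) with (exp l) by ring. apply exp_le_exp. nra. auto. }
    assert (H1 : sumR N (fun z => pi z * exp (l * f z)) <= 1 + 7/10 * l^2 * s2).
    { apply Rle_trans with (sumR N (fun z => pi z + l * (pi z * f z) + (7/10 * l^2) * (pi z * f z ^ 2))).
      - apply sumR_le. intros z Hz. destruct (Hf z Hz). pose proof (proj1 (proj1 Hpi) z Hz).
        assert (exp (l * f z) <= 1 + l * f z + 7/10 * (l * f z)^2) by (apply exp_quad; split; nra).
        nra.
      - rewrite !sumR_plus, !sumR_scal, Hmean, (proj2 (proj1 Hpi)).
        assert (0 <= l^2) by nra. nra. }
    assert (H2 : exp l - exp (- l) <= 1071 / 1000).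
    { pose proof exp_half_up. pose proof exp_half_low.
      assert (exp l <= exp (/2)) by (apply exp_le_exp; lra).
      assert (exp (- /2) <= exp (- l)) by (apply exp_le_exp; lra). lra. }
    assert (H3 : l^2 * s2 = g / 4) by (unfold l, g; field; lra).
    assert (H4 : (/2)^j * (exp l - exp (- l)) <= g / 12 * (1071/1000)).
    { assert (0 <= (/2)^j) by (apply pow_le; lra).
      assert (0 <= exp l - exp (- l)) by (assert (exp (-l) <= exp l) by (apply exp_le_exp; lra); lra).
      apply Rmult_le_compat; auto. rewrite HX in Hhalf. nra. }
    pose proof (exp_ineq1_le K). unfold K in *. nra. }
  assert (HK0 : 0 <= K) by (unfold K; lra).
  eapply Rle_trans.
  { apply (chernoff N P nu f (j * T) l K m (INR (S m) * gamma)); auto; lra. }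
  rewrite mult_INR.
  set (a := INR (S m)). assert (Ha : 0 < a) by (unfold a; apply lt_0_INR; lia).
  set (tT := INR T). assert (HtT : 1 <= tT) by (unfold tT; apply (le_INR 1); lia).
  set (jr := INR j) in *.
  assert (Hq : INR (m / (j * T)) <= a / (jr * tT)).
  { assert (INR (j * T) * INR (m / (j * T)) <= a).
    { rewrite <- mult_INR. unfold a. apply le_INR. pose proof (Nat.div_mod m (j * T) ltac:(lia)). lia. }
    rewrite mult_INR in H. fold jr tT in H.
    apply (Rmult_le_reg_l (jr * tT)). nra. field_simplify; nra. }
  set (y := a / (jr * tT)).
  assert (Hy0 : 0 <= y) by (unfold y; apply Rmult_le_pos; [lra| apply Rlt_le, Rinv_0_lt_compat; nra]).
  assert (Hz : a / (k * tT) = y * jr / k) by (unfold y; field; repeat split; lra).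
  rewrite Hz.
  set (F := floorR (y * jr / k - 1)).
  assert (HF : F <= y * jr / k - 1) by apply Hfl.
  assert (Hjk : jr / k <= 5/4).
  { apply (Rmult_le_reg_r k). lra. unfold Rdiv. rewrite Rmult_assoc, Rinv_l by lra. lra. }
  assert (Hc : gamma ^ 2 / (6 * s2) = g / 6) by (unfold g; field; lra).
  rewrite Hc.
  assert (Hlg : l / (jr * tT) * (a * gamma) = g / 2 * y) by (unfold l, g, y; field; repeat split; lra).
  rewrite <- !exp_plus. rewrite <- (exp_ln 4) at 1 by lra. rewrite <- exp_plus.
  apply exp_le_exp.
  assert (- (l / (jr * tT)) * (a * gamma) = - (g/2 * y)) by (rewrite <- Hlg; ring).
  rewrite H.
  pose proof ln4_ge.
  assert (K * INR (m / (j * T)) <= K * y) by (apply Rmult_le_compat_l; auto).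
  assert (F * (g/6) <= (y * jr / k - 1) * (g/6)) by (apply Rmult_le_compat_r; lra).
  assert (y * jr / k <= 5/4 * y) by (replace (y * jr / k) with (y * (jr / k)) by (field; lra); nra).
  unfold K in *. nra.
Qed.
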